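(* Let $(\mathcal{N},\mathcal{I})$ be a downward-closed constraint family with a downward-closed polyhedral relaxation $\mathcal{P}\subseteq[0,1]^{\mathcal{N}}$, let $\mathcal{U}_i$ ($i\in\mathcal{N}$) be pairwise disjoint finite non-empty sets with $\mathcal{U}=\bigcup_i\mathcal{U}_i$, and let $\pi$ be a $(b,c)$-selectable greedy OCRS for $\mathcal{P}$ with characteristic CRS $\bar\pi$. For $\bm{z}\in b\cdot\mathcal{P}'$ let $\bm{x}\in[0,1]^{\mathcal{N}}$ be given by $x_i=1-\prod_{e\in\mathcal{U}_i}(1-z_e)$ and define, for $S\subseteq\mathcal{U}$, \[\pi'(S)=\bigcup_{i\in\bar\pi_{\bm{x}}(S_\downarrow),\ |S\cap\mathcal{U}_i|=1}(S\cap\mathcal{U}_i),\qquad S_\downarrow=\{i\in\mathcal{N}:S\cap\mathcal{U}_i\ne\emptyset\}.\] Then $\pi'$ is a $(b,c\cdot\gamma)$-balanced monotone contention resolution scheme for $\mathcal{P}'$ (with respect to the partition extension of $(\mathcal{N},\mathcal{I})$), where $\gamma=\min_{i\in\mathcal{N}}\prod_{e\in\mathcal{U}_i}(1-z_e)$. That is: $\pi'(S)\subseteq S$ and $\pi'(S)$ is feasible in the partition extension for every $S$; $\Pr[e\in\pi'(S_1)]\ge\Pr[e\in\pi'(S_2)]$ whenever $e\in S_1\subseteq S_2\subseteq\mathcal{U}$; and $\Pr_{S\sim R(\bm{z})}[e\in\pi'(S)\mid e\in S]\ge c\gamma$ for every $e\in\mathcal{U}$.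
   Context: $R(\bm{x})$ denotes a random set containing each coordinate independently with probability equal to its entry. $\mathcal{P}'=\{\bm{y}\in[0,1]^{\mathcal{U}}:\exists\bm{x}\in\mathcal{P},\ \sum_{e\in\mathcal{U}_i}y_e=x_i\ \forall i\}$; $b\cdot\mathcal{Q}=\{b\bm{q}:\bm{q}\in\mathcal{Q}\}$. The partition extension of $(\mathcal{N},\mathcal{I})$ is the family $\{S\subseteq\mathcal{U}: S_\downarrow\in\mathcal{I},\ |S\cap\mathcal{U}_i|\le1\ \forall i\}$. A greedy OCRS $\pi$ for $\mathcal{P}$: for each $\bm{x}\in\mathcal{P}$ it fixes a (possibly random) downward-closed subfamily $\mathcal{F}_{\pi,\bm{x}}\subseteq\mathcal{I}$, and selects an arriving active element iff the selected set plus it lies in $\mathcal{F}_{\pi,\bm{x}}$. It is $(b,c)$-selectable if for all $\bm{x}\in b\cdot\mathcal{P}$ and $e\in\mathcal{N}$: $\Pr[I\cup\{e\}\in\mathcal{F}_{\pi,\bm{x}}\ \forall I\subseteq R(\bm{x}),I\in\mathcal{F}_{\pi,\bm{x}}]\ge c$. Its characteristic CRS is $\bar\pi_{\bm{x}}(A)=\{e\in A: I\cup\{e\}\in\mathcal{F}_{\pi,\bm{x}}\ \forall I\subseteq A\text{ with }I\in\mathcal{F}_{\pi,\bm{x}}\}$ (random if $\mathcal{F}_{\pi,\bm{x}}$ is). A CRS for a relaxation $\mathcal{Q}$ of a family $\mathcal{J}$ maps each $A$ (and point $\bm{y}$) to a random subset of $A$ that lies in $\mathcal{J}$; it is $(b,c)$-balanced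 if for all $\bm{y}\in b\cdot\mathcal{Q}$ and $e$ in the support of $\bm{y}$, $\Pr[e\in\pi_{\bm{y}}(R(\bm{y}))\mid e\in R(\bm{y})]\ge c$, and monotone if $\Pr[e\in\pi(A_1)]\ge\Pr[e\in\pi(A_2)]$ whenever $e\in A_1\subseteq A_2$. *)

(* Defs.v *)
From mathcomp Require Import all_boot all_order all_algebra.
Set Implicit Arguments. Unset Strict Implicit. Unset Printing Implicit Defensive.
Import Order.TTheory GRing.Theory Num.Theory.
Local Open Scope ring_scope.

Section Defs.
Variable R : realFieldType.

Definition down_closed_fam (N : finType) (F : {set {set N}}) : Prop :=
  forall A B : {set N}, B \subset A -> A \in F -> B \in F.

Definition polyhedral (N : finType) (P : (N -> R) -> Prop) : Prop :=
  exists (m : nat) (A : 'I_m -> N -> R) (d : 'I_m -> R),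
    forall x : N -> R, P x <-> (forall k, \sum_(i : N) A k i * x i <= d k).

Definition dc_poly_relaxation (N : finType) (I : {set {set N}})
    (P : (N -> R) -> Prop) : Prop :=
  [/\ (forall x, P x -> forall i, 0 <= x i <= 1),
      (forall x y, P x -> (forall i, 0 <= y i <= x i) -> P y),
      polyhedral P &
      (forall S, S \in I -> P (fun i => (i \in S)%:R))].

Definition scaleset (T : Type) (b : R) (Q : (T -> R) -> Prop) (y : T -> R) :=
  exists q, Q q /\ forall t, y t = b * q t.

(* Pr[R(x) = A] : each coordinate independently with probability x_i *)
Definition prodR (T : finType) (x : T -> R) (A : {set T}) : R :=
  \prod_(i in A) x i * \prod_(i in ~: A) (1 - x i).

(* the block U_i of the partition of U given by part : U -> N *)
Definition blk (N U : finType) (part : U -> N) (i : N) : {set U} :=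
  [set e | part e == i].

Definition Pprime (N U : finType) (part : U -> N) (P : (N -> R) -> Prop)
    (y : U -> R) : Prop :=
  (forall e, 0 <= y e <= 1) /\
  exists x, P x /\ forall i, \sum_(e in blk part i) y e = x i.

(* A greedy OCRS for P is given, for every x in P, by a probability
   distribution mu x over downward-closed (nonempty) subfamilies of I. *)
Definition greedy_ocrs (N : finType) (I : {set {set N}}) (P : (N -> R) -> Prop)
    (mu : (N -> R) -> {set {set N}} -> R) : Prop :=
  forall x, P x ->
    [/\ (forall F, 0 <= mu x F),
        \sum_(F : {set {set N}}) mu x F = 1 &
        (forall F, mu x F != 0 ->
           [/\ F \subset I, down_closed_fam F & set0 \in F])].

Definition sel_event (N : finType) (F : {set {set N}}) (A : {set N}) (e : N)
  : bool :=
  [forall J in powerset A, (J \in F) ==> (e |: J \in F)].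

Definition selectable (N : finType) (P : (N -> R) -> Prop)
    (mu : (N -> R) -> {set {set N}} -> R) (b c : R) : Prop :=
  forall x, scaleset b P x -> forall e : N,
    c <= \sum_(F : {set {set N}}) \sum_(A : {set N})
            mu x F * prodR x A * (sel_event F A e)%:R.

(* characteristic CRS (for a realization F of the random family) *)
Definition char_crs (N : finType) (F : {set {set N}}) (A : {set N}) : {set N} :=
  [set e in A | sel_event F A e].

Definition pi' (N U : finType) (part : U -> N) (F : {set {set N}}) (S : {set U})
  : {set U} :=
  [set e in S | (part e \in char_crs F (part @: S))
                && (#|S :&: blk part (part e)| == 1)%N].

Definition part_ext (N U : finType) (I : {set {set N}}) (part : U -> N)
    (S : {set U}) : bool :=
  (part @: S \in I) && [forall i, (#|S :&: blk part i| <= 1)%N].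

Definition Pr_pi' (N U : finType) (part : U -> N) (m : {set {set N}} -> R)
    (S : {set U}) (e : U) : R :=
  \sum_(F : {set {set N}}) m F * (e \in pi' part F S)%:R.

End Defs.

(* Main.v *)
Require Import Defs.
From mathcomp Require Import all_boot all_order all_algebra.
From mathcomp Require Import ring lra.
From Stdlib Require Import FunctionalExtensionality.
Set Implicit Arguments. Unset Strict Implicit. Unset Printing Implicit Defensive.
Import Order.TTheory GRing.Theory Num.Theory.
Local Open Scope ring_scope.

Section H.
Variable R : realFieldType.

Definition rr (T : finType) (y : T -> R) (j0 : T) (A : {set T}) : R :=
  \prod_(i in A | i != j0) y i * \prod_(i in ~: A | i != j0) (1 - y i).

Definition upd (T : finType) (y : T -> R) (u : T) (p : R) : T -> R :=
  fun t => if t == u then p else y t.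

Lemma prodR_split (T : finType) (y : T -> R) j0 A :
  prodR y A = (if j0 \in A then y j0 else 1 - y j0) * rr y j0 A.
Proof.
rewrite /prodR /rr; case: ifP => h.
  rewrite (bigD1 j0) //= -mulrA; congr (_ * (_ * _)); apply: eq_bigl => i.
  rewrite in_setC; case: (i =P j0) => [->|/eqP ne]; by rewrite ?h ?ne ?andbT.
rewrite [X in _ * X](bigD1 j0) /=; last by rewrite in_setC h.
rewrite mulrCA; congr (_ * (_ * _)); apply: eq_bigl => i.
case: (i =P j0) => [->|/eqP ne]; by rewrite ?h ?ne ?andbT.
Qed.

Lemma rrU1 (T : finType) (y : T -> R) j0 A : rr y j0 (j0 |: A) = rr y j0 A.
Proof.
rewrite /rr; congr (_ * _); apply: eq_bigl => i;
  rewrite ?in_setC in_setU1; case: (i =P j0) => [->|/eqP ne] /=; by rewrite ?eqxx ?andbF ?ne.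
Qed.

Lemma rr_ext (T : finType) (y y' : T -> R) j0 A :
  (forall t, t != j0 -> y t = y' t) -> rr y j0 A = rr y' j0 A.
Proof.
move=> h; rewrite /rr; congr (_ * _); apply: eq_bigr => i /andP [_ /h ->] //.
Qed.

Lemma L3 (T : finType) (y : T -> R) (j0 : T) (G : {set T} -> R) :
  \sum_(A : {set T}) prodR y A * G A =
  \sum_(A : {set T} | j0 \notin A) rr y j0 A * ((1 - y j0) * G A + y j0 * G (j0 |: A)).
Proof.
rewrite (bigID (fun A : {set T} => j0 \in A)) /=.
rewrite (reindex_onto (fun A : {set T} => j0 |: A) (fun A : {set T} => A :\ j0)) /=; last first.
  by move=> A h; rewrite setD1K.
rewrite (eq_bigl (fun A : {set T} => j0 \notin A)); last first.
  move=> A; rewrite setU11 /=; apply/eqP/idP => [<-|h]; first by rewrite setD11.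
  by rewrite setU1K.
rewrite addrC -big_split /=; apply: eq_bigr => A h.
rewrite (prodR_split y j0 A) (prodR_split y j0 (j0 |: A)) rrU1 setU11 (negbTE h).
ring.
Qed.


Lemma setU1A (T : finType) (u : T) (S : {set T}) : u |: (u |: S) = u |: S.
Proof. by rewrite setUA setUid. Qed.

Lemma S1 (T : finType) (y : T -> R) u p (H : {set T} -> R) : y u = 0 ->
  \sum_(S : {set T}) prodR (upd y u p) S * H S =
  \sum_(S : {set T}) prodR y S * ((1 - p) * H S + p * H (u |: S)).
Proof.
move=> hu; rewrite !(L3 _ u); apply: eq_bigr => S hS.
rewrite (@rr_ext _ (upd y u p) y); last by move=> t /negbTE ht; rewrite /upd ht.
rewrite /upd eqxx hu setU1A; ring.
Qed.

Lemma S2 (T : finType) (y : T -> R) u (H : {set T} -> R) :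
  \sum_(S : {set T}) prodR y S * ((u \notin S)%:R * H S) =
  (1 - y u) * \sum_(S : {set T}) prodR (upd y u 0) S * H S.
Proof.
rewrite !(L3 _ u) mulr_sumr; apply: eq_bigr => S hS.
rewrite (@rr_ext _ (upd y u 0) y); last by move=> t /negbTE ht; rewrite /upd ht.
rewrite /upd eqxx hS setU11 /=; ring.
Qed.

Lemma S3 (T : finType) (y : T -> R) u (G : {set T} -> R) :
  \sum_(S : {set T}) prodR y S * ((u \in S)%:R * G (S :\ u)) =
  y u * \sum_(S : {set T}) prodR (upd y u 0) S * G S.
Proof.
rewrite !(L3 _ u) mulr_sumr; apply: eq_bigr => S hS.
rewrite (@rr_ext _ (upd y u 0) y); last by move=> t /negbTE ht; rewrite /upd ht.
rewrite /upd eqxx (negbTE hS) setU11 setU1K //=; ring.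
Qed.

Lemma L2 (T : finType) (y y' : T -> R) j0 p (h : {set T} -> R) :
  (forall j, y' j = if j == j0 then 1 - (1 - p) * (1 - y j0) else y j) ->
  \sum_(A : {set T}) prodR y A * ((1 - p) * h A + p * h (j0 |: A)) =
  \sum_(A : {set T}) prodR y' A * h A.
Proof.
move=> hy; rewrite !(L3 _ j0); apply: eq_bigr => S hS.
rewrite (@rr_ext _ y' y); last by move=> t /negbTE ht; rewrite hy ht.
rewrite hy eqxx setU1A; ring.
Qed.

Lemma base (T : finType) (y : T -> R) (f : {set T} -> R) :
  (forall t, y t = 0) -> \sum_(S : {set T}) prodR y S * f S = f set0.
Proof.
move=> hy; rewrite (bigD1 set0) //= big1 ?addr0.
  rewrite /prodR big_set0 mul1r big1 ?mul1r // => i _; rewrite hy subr0 //.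
move=> S hS; case: (set_0Vmem S) => [e|[t ht]]; first by rewrite e eqxx in hS.
by rewrite /prodR (bigD1 t) //= hy !mul0r.
Qed.

Lemma fun_ind (T : finType) (Q : (T -> R) -> Prop) :
  Q (fun _ => 0) -> (forall y u p, y u = 0 -> Q y -> Q (upd y u p)) ->
  forall y, Q y.
Proof.
move=> Q0 Qs y.
suff: forall n (D : {set T}), #|D| = n -> Q (fun t => if t \in D then y t else 0).
  move=> /(_ _ setT erefl).
  have -> // : (fun t => if t \in setT then y t else 0) = y.
  by apply: functional_extensionality => t; rewrite in_setT.
elim=> [|n IH] D hD.
  move/eqP: hD; rewrite cards_eq0 => /eqP ->.
  have -> // : (fun t => if t \in set0 then y t else 0) = (fun _ => 0).
  by apply: functional_extensionality => t; rewrite in_set0.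
case: (set_0Vmem D) => [D0|[u hu]]; first by rewrite D0 cards0 in hD.
have hD' : #|D :\ u| = n by move: hD; rewrite (cardsD1 u) hu => -[].
have := Qs _ u (y u) _ (IH _ hD').
have -> : upd (fun t => if t \in D :\ u then y t else 0) u (y u) =
          (fun t => if t \in D then y t else 0).
  apply: functional_extensionality => t; rewrite /upd in_setD1.
  by case: (t =P u) => [->|] /=; rewrite ?hu.
apply; by rewrite setD11.
Qed.

Lemma mass (T : finType) (y : T -> R) : \sum_(S : {set T}) prodR y S = 1.
Proof.
pattern y; apply: fun_ind => [|y' u p hu IH].
  transitivity (\sum_(S : {set T}) prodR (fun _ : T => (0:R)) S * (fun _ => 1) S).
    by apply: eq_bigr => S _; rewrite mulr1.
  by rewrite base.
transitivity (\sum_(S : {set T}) prodR (upd y' u p) S * 1).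
  by apply: eq_bigr => S _; rewrite mulr1.
rewrite S1 // -[RHS]IH; apply: eq_bigr => S _; ring.
Qed.

Definition xof (N U : finType) (part : U -> N) (y : U -> R) (j : N) : R :=
  1 - \prod_(e in blk part j) (1 - y e).

Lemma xof_upd (N U : finType) (part : U -> N) (y : U -> R) u p j : y u = 0 ->
  xof part (upd y u p) j =
  if j == part u then 1 - (1 - p) * (1 - xof part y (part u)) else xof part y j.
Proof.
move=> hu; rewrite /xof; case: eqP => [->|ne].
  have ub : u \in blk part (part u) by rewrite /blk inE.
  rewrite (bigD1 u) //= [in RHS](bigD1 u) //= /upd eqxx hu subr0 mul1r.
  rewrite (eq_bigr (fun i => 1 - y i)); first by ring.
  by move=> i /andP [_ /negbTE ->].
congr (1 - _); apply: eq_bigr => i; rewrite /blk inE => /eqP hi; rewrite /upd.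
case: (i =P u) => // hiu; subst; by case: ne.
Qed.

Lemma claim (N U : finType) (part : U -> N) (y : U -> R) (h : {set N} -> R) :
  \sum_(S : {set U}) prodR y S * h (part @: S) =
  \sum_(A : {set N}) prodR (xof part y) A * h A.
Proof.
move: y h; apply: fun_ind => [|y' u p hu IH] h.
  rewrite base // imset0 base // => j; rewrite /xof big1 ?subrr // => i _; rewrite subr0.
  done.
rewrite S1 //.
rewrite (eq_bigr (fun S => prodR y' S *
   (fun A => (1 - p) * h A + p * h (part u |: A)) (part @: S))); last first.
  by move=> S _; rewrite imsetU1.
move: (IH (fun A : {set N} => (1 - p) * h A + p * h (part u |: A))) => /= ->.
apply: L2 => j; exact: xof_upd.
Qed.

Lemma setIU1_eq0 (T : finType) (S D : {set T}) u :
  (S :&: (u |: D) == set0) = (u \notin S) && (S :&: D == set0).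
Proof.
rewrite setIUr setU_eq0; congr (_ && _); apply/eqP/idP => [e|h].
  apply/negP => uS; have: u \in S :&: [set u] by rewrite !inE uS eqxx.
  by rewrite e inE.
apply/setP => t; rewrite !inE; apply/negbTE; apply/negP => /andP [tS /eqP tu].
by subst; rewrite tS in h.
Qed.

Lemma S2D (T : finType) (D : {set T}) (y : T -> R) (H : {set T} -> R) :
  \sum_(S : {set T}) prodR y S * ((S :&: D == set0)%:R * H S) =
  \prod_(u in D) (1 - y u) *
  \sum_(S : {set T}) prodR (fun t => if t \in D then 0 else y t) S * H S.
Proof.
move: {2}#|D| (erefl #|D|) => n; elim: n D y H => [|n IH] D y H hD.
  move/eqP: hD; rewrite cards_eq0 => /eqP ->; rewrite big_set0 mul1r.
  apply: eq_bigr => S _; rewrite setI0 eqxx mul1r; congr (_ * _); congr (prodR _ S).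
  by apply: functional_extensionality => t; rewrite in_set0.
case: (set_0Vmem D) => [D0|[u hu]]; first by rewrite D0 cards0 in hD.
have hD' : #|D :\ u| = n by move: hD; rewrite (cardsD1 u) hu => -[].
rewrite (eq_bigr (fun S => prodR y S * ((u \notin S)%:R *
     ((S :&: (D :\ u) == set0)%:R * H S)))); last first.
  move=> S _; rewrite -{1}(setD1K hu) setIU1_eq0.
  by case: (u \notin S); case: (S :&: (D :\ u) == set0); rewrite /= ?mul0r ?mul1r.
rewrite S2 IH // [X in _ = X * _](bigD1 u) //= -[RHS]mulrA; congr (_ * (_ * _)).
  apply: eq_big => [i|i]; first by rewrite in_setD1 andbC.
  by rewrite in_setD1 => /andP [hi _]; rewrite /upd (negbTE hi).
apply: eq_bigr => S _; congr (_ * _); congr (prodR _ S).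
apply: functional_extensionality => t; rewrite /upd in_setD1.
by case: (t =P u) => [->|] /=; rewrite ?hu.
Qed.


Lemma wprod (T : finType) (A : {set T}) (w : T -> R) :
  (forall t, 0 <= w t <= 1) ->
  (0 <= \prod_(t in A) (1 - w t) <= 1) /\ (0 <= \sum_(t in A) w t) /\
  (1 - \sum_(t in A) w t <= \prod_(t in A) (1 - w t)).
Proof.
move=> hw.
apply: (big_ind2 (fun a s => (0 <= a <= 1) /\ (0 <= s) /\ (1 - s <= a))).
- by rewrite subr0 lexx ler01.
- move=> a1 s1 a2 s2 [/andP [h1 h2] [h3 h4]] [/andP [h5 h6] [h7 h8]].
  split; first (apply/andP; split; nra). split; nra.
- move=> t _; have /andP [h1 h2] := hw t; split; first (apply/andP; split; lra).
  split; lra.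
Qed.

End H.

Lemma char_in (N : finType) (F : {set {set N}}) A : set0 \in F ->
  forall J : {set N}, J \subset char_crs F A -> J \in F.
Proof.
move=> F0 J; move: {2}#|J| (erefl #|J|) => n; elim: n J => [|n IH] J hJ sJ.
  by move/eqP: hJ; rewrite cards_eq0 => /eqP ->.
case: (set_0Vmem J) => [J0|[j hj]]; first by rewrite J0 cards0 in hJ.
have hJ' : #|J :\ j| = n by move: hJ; rewrite (cardsD1 j) hj => -[].
have sJ' : J :\ j \subset char_crs F A := subset_trans (subD1set J j) sJ.
have J'F := IH _ hJ' sJ'.
have := subsetP sJ j hj; rewrite /char_crs inE => /andP [jA /forall_inP sel].
have := sel (J :\ j); rewrite setD1K // J'F /=; apply.
rewrite powersetE; apply: subset_trans sJ' _; apply/subsetP => t.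
by rewrite inE => /andP [].
Qed.

Lemma sel_U1 (N : finType) (F : {set {set N}}) (A : {set N}) i :
  sel_event F (i |: A) i = sel_event F A i.
Proof.
rewrite /sel_event; apply/forall_inP/forall_inP => h J.
  rewrite !powersetE => sJ; apply: h; rewrite powersetE.
  by apply: subset_trans sJ (subsetUr _ _).
rewrite powersetE => sJ; case iJ: (i \in J).
  have -> : i |: J = J by apply/setP => t; rewrite in_setU1; case: (t =P i) => // ->.
  by apply/implyP.
apply: h; rewrite powersetE; apply/subsetP => t tJ.
have := subsetP sJ t tJ; rewrite in_setU1; case: (t =P i) => //= ti.
by subst; rewrite tJ in iJ.
Qed.

Lemma sel_mono (N : finType) (F : {set {set N}}) (A1 A2 : {set N}) i :
  A1 \subset A2 -> sel_event F A2 i -> sel_event F A1 i.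
Proof.
move=> s /forall_inP h; apply/forall_inP => J; rewrite powersetE => sJ.
apply: h; rewrite powersetE; exact: subset_trans sJ s.
Qed.

Lemma pi'_mem (N U : finType) (part : U -> N) (F : {set {set N}}) S e :
  (e \in pi' part F S) =
  (e \in S) && (((S :\ e) :&: blk part (part e) == set0) &&
                sel_event F (part @: (S :\ e)) (part e)).
Proof.
rewrite /pi' inE; case eS: (e \in S) => //=.
rewrite /char_crs inE imset_f //= -{1 2}(setD1K eS) imsetU1 sel_U1 andbC.
congr (_ && _).
rewrite (cardsD1 e) setD1K // inE eS /blk inE eqxx /= add1n eqSS cards_eq0.
apply/eqP/eqP => h; apply/setP => t; move/setP: h => /(_ t); rewrite !inE;
  by case: (t =P e) => [->|] /=; rewrite ?eqxx ?andbF.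
Qed.


Theorem lemma4 (R : realFieldType) (N U : finType) (I : {set {set N}})
    (P : (N -> R) -> Prop) (part : U -> N)
    (mu : (N -> R) -> {set {set N}} -> R) (b c : R) :
  down_closed_fam I -> set0 \in I ->
  dc_poly_relaxation I P ->
  (forall i : N, exists e : U, part e = i) ->
  0 <= b <= 1 ->
  greedy_ocrs I P mu ->
  selectable P mu b c ->
  forall z : U -> R, scaleset b (Pprime part P) z ->
  let x := fun i : N => 1 - \prod_(e in blk part i) (1 - z e) in
  let gamma := \big[Num.min/1]_(i : N) \prod_(e in blk part i) (1 - z e) in
  [/\ (* pi'(S) is a subset of S and feasible, for every realization *)
      (forall (S : {set U}) (F : {set {set N}}), mu x F != 0 ->
         pi' part F S \subset S /\ part_ext I part (pi' part F S)),
      (* monotone *)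
      (forall (e : U) (S1 S2 : {set U}), e \in S1 -> S1 \subset S2 ->
         Pr_pi' part (mu x) S2 e <= Pr_pi' part (mu x) S1 e) &
      (* (b, c*gamma)-balanced *)
      (forall e : U, 0 < z e ->
         c * gamma <=
         (\sum_(S : {set U}) prodR z S * (e \in S)%:R * Pr_pi' part (mu x) S e)
         / (\sum_(S : {set U}) prodR z S * (e \in S)%:R))].
Proof.
move=> dcI I0 [P01 Pdc _ _] surj /andP [b0 b1] hg hsel z
  [q [[q01 [x' [Px' hq]]] hz]] x gamma.
have hz01 : forall t, 0 <= z t <= 1.
  move=> t; rewrite hz; have /andP [h1 h2] := q01 t; apply/andP; split; nra.
have hx'01 : forall j, 0 <= x' j <= 1 := P01 _ Px'.
have hx : forall j, 0 <= x j <= b * x' j.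
  move=> j; have [/andP [h1 h2] [h3 h4]] := wprod (blk part j) hz01.
  have -> : b * x' j = \sum_(t in blk part j) z t.
    by rewrite -hq mulr_sumr; apply: eq_bigr => t _; rewrite hz.
  rewrite /x; apply/andP; split; lra.
have hxx' : forall j, 0 <= x j <= x' j.
  move=> j; have /andP [h1 h2] := hx j; have /andP [h3 h4] := hx'01 j.
  apply/andP; split; nra.
have Px : P x := Pdc _ _ Px' hxx'.
have hx01 : forall j, 0 <= x j <= 1.
  move=> j; have /andP [h1 h2] := hxx' j; have /andP [h3 h4] := hx'01 j.
  apply/andP; split; lra.
have hSx : scaleset b P x.
  case: (b =P 0) => [b00|/eqP bn0].
    exists x'; split => // j; rewrite b00 mul0r.
    have := hx j; rewrite b00 mul0r => /andP [h1 h2]; lra.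
  have bp : 0 < b by rewrite lt_def bn0 b0.
  exists (fun j => x j / b); split; last by move=> j; rewrite mulrC divfK.
  apply: (Pdc _ _ Px') => j; have /andP [h1 h2] := hx j.
  apply/andP; split; first by apply: divr_ge0.
  by rewrite ler_pdivrMr // mulrC.
have [mu0 mu1 muF] := hg x Px.
split.
- move=> S F hF; have [FI Fdc F0] := muF F hF; split.
    by apply/subsetP => t; rewrite /pi' inE => /andP [].
  apply/andP; split.
    apply: (subsetP FI); apply: (Fdc (char_crs F (part @: S))); last first.
      exact: char_in F0 _ (subxx _).
    apply/subsetP => j /imsetP [t ht ->]; move: ht; rewrite /pi' inE.
    by case/and3P.
  apply/forallP => j.
  case: (set_0Vmem (pi' part F S :&: blk part j)) => [->|[t ht]].
    by rewrite cards0.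
  move: ht; rewrite in_setI => /andP [ht tj].
  have tj' : part t = j by move: tj; rewrite /blk inE => /eqP.
  have := ht; rewrite /pi' inE => /and3P [_ _ /eqP h1].
  rewrite -h1 tj'; apply: subset_leq_card; apply/subsetP => s.
  rewrite !in_setI => /andP [hs ->]; rewrite andbT.
  by move: hs; rewrite /pi' inE => /andP [].
- move=> e S1 S2 he sub; rewrite /Pr_pi'; apply: ler_sum => F _.
  apply: ler_wpM2l; first exact: mu0.
  have imp : e \in pi' part F S2 -> e \in pi' part F S1.
    rewrite /pi' !inE => /and3P [_ hc h1]; apply/and3P; split => //.
      move: hc; rewrite /char_crs ?inE => /andP [_ hs]. rewrite /char_crs ?inE.
      rewrite imset_f //=; apply: sel_mono hs; exact: imsetS.
    have le : (#|S1 :&: blk part (part e)| <= #|S2 :&: blk part (part e)|)%N.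
      by apply: subset_leq_card; apply: setSI.
    have ge : (0 < #|S1 :&: blk part (part e)|)%N.
      by apply/card_gt0P; exists e; rewrite in_setI he /blk inE eqxx.
    by rewrite eqn_leq ge andbT -(eqP h1) le.
  case h2: (e \in pi' part F S2); first by rewrite (imp h2).
  by rewrite ler_nat.
- move=> e hze.
  have prodR_ge0 : forall A, 0 <= prodR x A.
    move=> A; apply: mulr_ge0; apply: prodr_ge0 => j _; have /andP [h1 h2] := hx01 j;
      lra.
  have hT : forall F, \sum_(S : {set U}) prodR z S * (e \in pi' part F S)%:R =
     z e * (\prod_(u in blk part (part e)) (1 - upd z e 0 u) *
       \sum_(A : {set N}) prodR x A * (sel_event F A (part e))%:R).
    move=> F.
    pose G : {set U} -> R := (fun T : {set U} => (T :&: blk part (part e) == set0)%:R *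
                 (sel_event F (part @: T) (part e))%:R).
    transitivity (\sum_(S : {set U}) prodR z S * ((e \in S)%:R * G (S :\ e))).
      apply: eq_bigr => S _; rewrite pi'_mem /G /=.
      by case: (e \in S); case: (_ == set0); case: sel_event;
        rewrite /= ?mul0r ?mul1r ?mulr0 ?mulr1.
    rewrite (S3 z e G); congr (_ * _); rewrite /G.

    rewrite (S2D _ _ (fun S => (sel_event F (part @: S) (part e))%:R)).
    congr (_ * _).
    rewrite (claim part _ (fun A => (sel_event F A (part e))%:R)).
    transitivity (\sum_(A : {set N}) prodR (xof part (fun t =>
       if t \in blk part (part e) then 0 else upd z e 0 t)) A *
       ((1 - x (part e)) * (sel_event F A (part e))%:R +
      x (part e) * (sel_event F (part e |: A) (part e))%:R)).
      by apply: eq_bigr => A _; rewrite sel_U1; ring.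
    apply: L2.
    move=> j; rewrite /xof; case: (j =P part e) => [->|/eqP ne].
      rewrite big1; first ring.
      by move=> t ->; rewrite subr0.
    rewrite /x; congr (1 - _); apply: eq_bigr => t; rewrite /blk inE => /eqP tj.
    have -> : (t \in [set e0 | part e0 == part e]) = false.
      by rewrite inE tj (negbTE ne).
    rewrite /upd; case: (t =P e) => // te; subst; by rewrite eqxx in ne.
  have hden : \sum_(S : {set U}) prodR z S * (e \in S)%:R = z e.
    transitivity (\sum_(S : {set U}) prodR z S * ((e \in S)%:R * (fun _ => (1:R)) (S :\ e))).
      by apply: eq_bigr => S _; rewrite mulr1.
    rewrite (S3 z e (fun _ => 1)); under eq_bigr => S _ do rewrite /= mulr1.
    by rewrite mass mulr1.
  have hnum : \sum_(S : {set U}) prodR z S * (e \in S)%:R * Pr_pi' part (mu x) S e =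
      \sum_(F : {set {set N}}) mu x F *
         (\sum_(S : {set U}) prodR z S * (e \in pi' part F S)%:R).
    rewrite /Pr_pi'; under eq_bigr => S _ do rewrite mulr_sumr.
    rewrite exchange_big /=; apply: eq_bigr => F _; rewrite mulr_sumr.
    apply: eq_bigr => S _.
    have imp : e \in pi' part F S -> e \in S by rewrite /pi' inE => /andP [].
    case: (e \in pi' part F S) imp => [/(_ isT) -> | _] /=; ring.
  rewrite hden hnum; under eq_bigr => F _ do rewrite hT.
  set Q := \prod_(u in blk part (part e)) (1 - upd z e 0 u).
  set Sig := \sum_(F : {set {set N}}) mu x F *
       \sum_(A : {set N}) prodR x A * (sel_event F A (part e))%:R.
  have -> : \sum_(F : {set {set N}}) mu x F * (z e *
       (Q * \sum_(A : {set N}) prodR x A * (sel_event F A (part e))%:R)) =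
       z e * (Q * Sig).
    rewrite /Sig !mulr_sumr; apply: eq_bigr => F _; ring.
  have ze0 : z e != 0 by rewrite gt_eqF.
  have -> : z e * (Q * Sig) / z e = Q * Sig by field.
  have hSc : c <= Sig.
    have := hsel x hSx (part e); rewrite /Sig.
    suff -> : \sum_(F : {set {set N}}) mu x F *
       \sum_(A : {set N}) prodR x A * (sel_event F A (part e))%:R =
       \sum_(F : {set {set N}}) \sum_(A : {set N})
            mu x F * prodR x A * (sel_event F A (part e))%:R by [].
    apply: eq_bigr => F _; rewrite mulr_sumr; apply: eq_bigr => A _; ring.
  have hS0 : 0 <= Sig.
    apply: sumr_ge0 => F _; apply: mulr_ge0; first exact: mu0.
    apply: sumr_ge0 => A _; apply: mulr_ge0; first exact: prodR_ge0.
    exact: ler0n.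
  have hQ : gamma <= Q.
    rewrite /gamma; apply: le_trans (bigmin_le _ (part e) _) _.
    apply: ler_prod => t _; rewrite /upd; have /andP [h1 h2] := hz01 t.
    case: (t == e); apply/andP; split; lra.
  have hg0 : 0 <= gamma.
    rewrite /gamma; apply: le_bigmin => [|j _]; first exact: ler01.
    by apply: prodr_ge0 => t _; have /andP [h1 h2] := hz01 t; lra.
  nra.
Qed.
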